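(* As formal power series in $t$, $$\sum_{n\ge0}R_{1,n}t^n=R_{1,0}\,\frac{Z^{(G_r)}(0,-ty_2,-ty_3,\dots,-ty_{2r+1})}{Z^{(G_r)}(-ty_1,-ty_2,\dots,-ty_{2r+1})},$$ with $y_{2\alpha-1}=\frac{R_{\alpha-1,0}R_{\alpha,1}}{R_{\alpha,0}R_{\alpha-1,1}}$ ($1\le\alpha\le r+1$) and $y_{2\alpha}=\frac{R_{\alpha-1,0}R_{\alpha+1,1}}{R_{\alpha,0}R_{\alpha,1}}$ ($1\le\alpha\le r$).
   Context: Fix $r\ge1$, $I_r=\{1,\dots,r\}$. Let $R_{1,0},\dots,R_{r,0},R_{1,1},\dots,R_{r,1}$ be algebraically independent indeterminates over $\mathbb Q$ and $(R_{\alpha,n})_{0\le\alpha\le r+1,n\in\mathbb Z}$ the $A_r$ $Q$-system: the unique family of nonzero elements of $\mathbb Q(R_{1,0},\dots,R_{r,1})$ with these initial values, $R_{0,n}=R_{r+1,n}=1$, and $R_{\alpha,n+1}R_{\alpha,n-1}=R_{\alpha,n}^2+R_{\alpha+1,n}R_{\alpha-1,n}$ ($\alpha\in I_r$, $n\in\mathbb Z$). The graph $G_r$ has vertices $1,\dots,2r+1$ and edges $\{1,2\}$, $\{2k,2k+1\}$ ($1\le k\le r$), $\{2k-2,2k\}$ and $\{2k-1,2k\}$ ($2\le k\le r$). A hard particle configuration is a set of vertices no two of which are adjacent; with vertex weights $z_1,\dots,z_{2r+1}$, $Z^{(G_r)}(z_1,\dots,z_{2r+1})=\sum_C\prod_{i\in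 C}z_i$, summed over all hard particle configurations $C$ on $G_r$ (including the empty one). *)

(* Defs.v *)
From HB Require Import structures.
From mathcomp Require Import all_boot all_order all_algebra.
Set Implicit Arguments. Unset Strict Implicit. Unset Printing Implicit Defensive.
Import Order.TTheory GRing.Theory Num.Theory.
Local Open Scope ring_scope.

(* mpoly k = rat[x_0,...,x_{k-1}], built as nested univariate polynomials. *)
Fixpoint mpoly (k : nat) : idomainType :=
  if k is k'.+1 then ({poly mpoly k'} : idomainType) else rat.

Fixpoint mvar (k : nat) : nat -> mpoly k :=
  match k return nat -> mpoly k with
  | 0 => fun _ => 0
  | k'.+1 => fun i => if i is i'.+1 then (mvar k' i')%:P else 'X
  end.

Definition QField (r : nat) : fieldType := {fraction (mpoly (2 * r))}.

(* Initial values: R_{a,0} = x_{a-1}, R_{a,1} = x_{r+a-1}  (1 <= a <= r);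
   R_{0,n} = R_{r+1,n} = 1. *)
Definition Qinit0 (r : nat) (a : nat) : QField r :=
  if (1 <= a <= r)%N then (@FracField.tofrac (mpoly (2 * r)) (mvar (2 * r) a.-1)) else 1.
Definition Qinit1 (r : nat) (a : nat) : QField r :=
  if (1 <= a <= r)%N then (@FracField.tofrac (mpoly (2 * r)) (mvar (2 * r) (r + a.-1))) else 1.

(* Qpair r n = (R_{.,n}, R_{.,n+1}), using
   R_{a,n+1} = (R_{a,n}^2 + R_{a+1,n} R_{a-1,n}) / R_{a,n-1}. *)
Fixpoint Qpair (r : nat) (n : nat) : (nat -> QField r) * (nat -> QField r) :=
  match n with
  | 0 => (Qinit0 r, Qinit1 r)
  | n'.+1 =>
      let: (A, B) := Qpair r n' in
      (B, fun a => if (1 <= a <= r)%N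
                   then (B a ^+ 2 + B a.+1 * B a.-1) / A a else 1)
  end.

(* R_{a,n} for n >= 0 (the A_r Q-system). *)
Definition Qsys (r : nat) (a n : nat) : QField r := (Qpair r n).1 a.

(* Vertex v (1 <= v <= 2r+1) of the paper is i : 'I_(2r+1) with v = i+1. *)
Definition Gedge0 (r : nat) (u v : nat) : bool :=
  [|| (u == 1) && (v == 2),
      [exists k : 'I_r.+1, [&& (1 <= k)%N, (u == 2 * k)%N & (v == (2 * k).+1)%N]],
      [exists k : 'I_r.+1, [&& (2 <= k)%N, (u == 2 * k - 2)%N & (v == 2 * k)%N]]
    | [exists k : 'I_r.+1, [&& (2 <= k)%N, (u == 2 * k - 1)%N & (v == 2 * k)%N]]].

Definition Gadj (r : nat) (i j : 'I_(2 * r + 1)) : bool :=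
  Gedge0 r i.+1 j.+1 || Gedge0 r j.+1 i.+1.

Definition hard_particle (r : nat) (C : {set 'I_(2 * r + 1)}) : bool :=
  [forall i in C, forall j in C, ~~ Gadj i j].

(* Z^{(G_r)}(z_1,...,z_{2r+1}), with z_v = z (v-1). *)
Definition ZG (r : nat) (T : comNzRingType) (z : 'I_(2 * r + 1) -> T) : T :=
  \sum_(C : {set 'I_(2 * r + 1)} | hard_particle C) \prod_(i in C) z i.

Definition fps (K : fieldType) := nat -> K.

Definition fps_of_poly (K : fieldType) (p : {poly K}) : fps K := fun n => p`_n.

Definition fps_mul (K : fieldType) (a b : fps K) : fps K :=
  fun n => \sum_(i < n.+1) a i * b (n - i)%N.

Definition fps_scale (K : fieldType) (c : K) (a : fps K) : fps K :=
  fun n => c * a n.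

Fixpoint fps_inv_upto (K : fieldType) (a : fps K) (n : nat) : seq K :=
  match n with
  | 0 => [:: (a 0%N)^-1]
  | n'.+1 =>
      let s := fps_inv_upto a n' in
      rcons s (- (a 0%N)^-1 * \sum_(k < n'.+1) a k.+1 * nth 0 s (n' - k)%N)
  end.

Definition fps_inv (K : fieldType) (a : fps K) : fps K :=
  fun n => nth 0 (fps_inv_upto a n) n.

(* y_v = yw r (v-1):  y_{2a-1} = R_{a-1,0}R_{a,1}/(R_{a,0}R_{a-1,1}),
                      y_{2a}   = R_{a-1,0}R_{a+1,1}/(R_{a,0}R_{a,1}). *)
Definition yw (r : nat) (i : nat) : QField r :=
  if ~~ odd i then
    let a := (i./2).+1 in
    Qsys r a.-1 0 * Qsys r a 1 / (Qsys r a 0 * Qsys r a.-1 1)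
  else
    let a := (i./2).+1 in
    Qsys r a.-1 0 * Qsys r a.+1 1 / (Qsys r a 0 * Qsys r a 1).

(* Main.v *)
Require Import Defs.
From HB Require Import structures.
From mathcomp Require Import all_boot all_order all_algebra.
From Stdlib Require Import Ring Field Lia.
Import Order.TTheory GRing.Theory Num.Theory.
Local Open Scope ring_scope.

Set Implicit Arguments. Unset Strict Implicit. Unset Printing Implicit Defensive.

Section RingTac.
Variable R : comNzRingType.
Definition radd (x y : R) : R := x + y.
Definition rmul (x y : R) : R := x * y.
Definition ropp (x : R) : R := - x.
Definition rsub (x y : R) : R := x - y.
Definition r0 : R := 0.
Definition r1 : R := 1.
Lemma Rth : @ring_theory R r0 r1 radd rmul rsub ropp eq.
Proof.
split; rewrite /radd /rmul /r0 /r1 /rsub /ropp.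
exact: add0r. exact: addrC. exact: addrA. exact: mul1r. exact: mulrC. exact: mulrA. exact: mulrDl. by []. exact: subrr.
Qed.
End RingTac.

Section FieldTac.
Variable F : fieldType.
Definition kinv (x : F) : F := x^-1.
Definition kdiv (x y : F) : F := x / y.
Definition kadd (x y : F) : F := x + y.
Definition kmul (x y : F) : F := x * y.
Definition kopp (x : F) : F := - x.
Definition ksub (x y : F) : F := x - y.
Definition k0 : F := 0.
Definition k1 : F := 1.
Lemma Fth : @field_theory F k0 k1 kadd kmul ksub kopp kdiv kinv eq.
Proof.
split.
- split; rewrite /kadd /kmul /k0 /k1 /ksub /kopp.
  exact: add0r. exact: addrC. exact: addrA. exact: mul1r. exact: mulrC. exact: mulrA. exact: mulrDl. by []. exact: subrr.
- by apply/eqP; rewrite /k0 /k1 oner_eq0.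
- by [].
- by move=> p /eqP; exact: mulVf.
Qed.
End FieldTac.

Ltac trR R t := lazymatch t with
 | ?x + ?y => let a := trR R x in let b := trR R y in constr:(@radd R a b)
 | ?x * ?y => let a := trR R x in let b := trR R y in constr:(@rmul R a b)
 | - ?x => let a := trR R x in constr:(@ropp R a)
 | ?x ^+ 2 => let a := trR R x in constr:(@rmul R a a)
 | 0 => constr:(@r0 R)
 | 1 => constr:(@r1 R)
 | _ => constr:(t : R)
 end.
Ltac trF R t := lazymatch t with
 | ?x + ?y => let a := trF R x in let b := trF R y in constr:(@kadd R a b)
 | ?x * ?y => let a := trF R x in let b := trF R y in constr:(@kmul R a b)
 | - ?x => let a := trF R x in constr:(@kopp R a)
 | ?x ^-1 => let a := trF R x in constr:(@kinv R a)
 | ?x ^+ 2 => let a := trF R x in constr:(@kmul R a a)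
 | 0 => constr:(@k0 R)
 | 1 => constr:(@k1 R)
 | _ => constr:(t : R)
 end.
Ltac mring R := lazymatch goal with |- ?x = ?y =>
  let a := trR R x in let b := trR R y in change (a = b) end; ring.
Ltac mfield R := lazymatch goal with |- ?x = ?y =>
  let a := trF R x in let b := trF R y in change (a = b) end; field.

Definition Fth_rat := Fth rat.
Add Field ratF : Fth_rat.
Section Fps.
Variable K : fieldType.

Lemma size_inv_upto (a : fps K) n : size (fps_inv_upto a n) = n.+1.
Proof. by elim: n => [|n IH] //=; rewrite size_rcons IH. Qed.

Lemma nth_inv_upto (a : fps K) n m : (m <= n)%N ->
  nth 0 (fps_inv_upto a n) m = fps_inv a m.
Proof.
elim: n => [|n IH]; first by rewrite leqn0 => /eqP ->.
rewrite leq_eqVlt => /orP [/eqP -> //|hm].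
by rewrite /= nth_rcons size_inv_upto hm IH.
Qed.

Lemma fps_invS (a : fps K) n : fps_inv a n.+1 =
  - (a 0%N)^-1 * \sum_(k < n.+1) a k.+1 * fps_inv a (n - k)%N.
Proof.
rewrite /fps_inv /= nth_rcons size_inv_upto ltnn eqxx; congr (_ * _).
by apply: eq_bigr => k _; rewrite nth_inv_upto // leq_subr.
Qed.

Lemma fps_mul_inv0 (a : fps K) n : a 0%N != 0 ->
  fps_mul a (fps_inv a) n.+1 = 0.
Proof.
move=> ha; rewrite /fps_mul big_ord_recl subn0 fps_invS.
have -> : \sum_(i < n.+1) a (lift ord0 i) * fps_inv a (n.+1 - lift ord0 i)%N
  = \sum_(k < n.+1) a k.+1 * fps_inv a (n - k)%N.
  by apply: eq_bigr => i _; rewrite lift0 subSS.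
by rewrite mulrA mulrN mulfV // mulN1r addNr.
Qed.

Lemma fps_mul0 (a b : fps K) : fps_mul a b 0 = a 0%N * b 0%N.
Proof. by rewrite /fps_mul big_ord1. Qed.

Lemma fps_inv0 (a : fps K) : fps_inv a 0 = (a 0%N)^-1.
Proof. by []. Qed.
End Fps.

Ltac tolia := intros; repeat match goal with
 | H : is_true (_ <= _)%N |- _ => move/ssrnat.leP: H => H
 | H : is_true (_ < _)%N |- _ => move/ssrnat.ltP: H => H
 | H : is_true (_ == _ :> nat) |- _ => move/eqP: H => H
 | H : is_true (~~ (_ == _ :> nat)) |- _ => move/eqP: H => H
 | H : is_true (~~ (_ < _)%N) |- _ => rewrite -leqNgt in H
 | H : is_true (~~ (_ <= _)%N) |- _ => rewrite -ltnNge in H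
 | |- is_true (~~ (_ < _)%N) => rewrite -leqNgt
 | |- is_true (~~ (_ <= _)%N) => rewrite -ltnNge
 | |- is_true (_ <= _)%N => apply/ssrnat.leP
 | |- is_true (_ < _)%N => apply/ssrnat.ltP
 | |- is_true (_ == _ :> nat) => apply/eqP
 | |- is_true (~~ (_ == _ :> nat)) => apply/negP; move/eqP
 end;
 repeat match goal with H : context [double _] |- _ => rewrite -mul2n in H end;
 rewrite -?mul2n;
 repeat match goal with H : _ |- _ => revert H end;
 rewrite -?plusE -?minusE -?multE; intros; lia.

Lemma Gedge0E r u v : (1 <= u)%N -> (v <= 2 * r + 1)%N ->
  Gedge0 r u v = (v == u.+1) || ((v == u.+2) && ~~ odd u).
Proof.
move=> hu hv; apply/idP/idP.
- case/or4P.
  + by case/andP => /eqP -> /eqP ->.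
  + by case/existsP => k /and3P [_ /eqP -> /eqP ->]; rewrite eqxx.
  + case/existsP => k /and3P [hk /eqP -> /eqP ->].
    have -> : (2 * k - 2 = 2 * (k - 1))%N by tolia.
    rewrite oddM /= andbT; apply/ssrbool.orP; right; tolia.
  + case/existsP => k /and3P [hk /eqP -> /eqP ->]; apply/ssrbool.orP; left; tolia.
- rewrite /Gedge0; have hud := odd_double_half u; rewrite -mul2n in hud.
  set m := u./2 in hud; clearbody m.
  case/orP => [/eqP hvu | /andP [/eqP hvu hodd]].
  + case hod : (odd u) hud => /= hud; rewrite ?add1n ?add0n in hud.
    * case: (m =P 0%N) => [hm0 | hm0].
        apply/ssrbool.orP; left; apply/ssrbool.andP; split; apply/eqP; by rewrite ?hvu -hud hm0.
      have hm : (m.+1 < r.+1)%N by tolia.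
      apply/ssrbool.orP; right; apply/ssrbool.orP; right; apply/ssrbool.orP; right; apply/existsP; exists (Ordinal hm); apply/and3P; split => /=; tolia.
    * have hm : (m < r.+1)%N by tolia.
      apply/ssrbool.orP; right; apply/ssrbool.orP; left; apply/existsP; exists (Ordinal hm); apply/and3P; split => /=; tolia.
  + rewrite (negbTE hodd) /= in hud.
    have hm : (m.+1 < r.+1)%N by tolia.
    apply/ssrbool.orP; right; apply/ssrbool.orP; right; apply/ssrbool.orP; left; apply/existsP; exists (Ordinal hm); apply/and3P; split => /=; tolia.
Qed.

Section Graph.
Variable r : nat.
Local Notation n := (2 * r + 1)%N.

Lemma GadjE (i j : 'I_n) :
  Gadj i j = [|| (j == i.+1 :> nat), ((j == i.+2 :> nat) && odd i),
                 (i == j.+1 :> nat) | ((i == j.+2 :> nat) && odd j)].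
Proof.
rewrite /Gadj (Gedge0E (ltn0Sn i) (ltn_ord j)) (Gedge0E (ltn0Sn j) (ltn_ord i)).
by rewrite !eqSS !oddS !negbK -!orbA.
Qed.

Lemma Gadj_irr (i : 'I_n) : Gadj i i = false.
Proof.
have h1 : (i == i.+1 :> nat) = false by apply/negbTE; tolia.
have h2 : (i == i.+2 :> nat) = false by apply/negbTE; tolia.
by rewrite GadjE h1 h2.
Qed.


Lemma hardP (C : {set 'I_n}) :
  reflect (forall i j, i \in C -> j \in C -> ~~ Gadj i j) (hard_particle C).
Proof.
apply: (iffP forall_inP) => [h i j hi hj | h i hi].
- exact: (forall_inP (h i hi)).
- apply/forall_inP => j hj; exact: h.
Qed.

Lemma nadj_far (a b : 'I_n) : (a + (if odd a then 3 else 2)%N <= b)%N ->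
  ~~ Gadj a b && ~~ Gadj b a.
Proof.
move=> h.
have e1 : (b == a.+1 :> nat) = false by apply/negbTE; case: (odd a) h => /= h; tolia.
have e2 : (a == b.+1 :> nat) = false by apply/negbTE; case: (odd a) h => /= h; tolia.
have e3 : (a == b.+2 :> nat) = false by apply/negbTE; case: (odd a) h => /= h; tolia.
have e4 : ((b == a.+2 :> nat) && odd a) = false.
  by case: (odd a) h; rewrite ?andbF ?andbT // => h; apply/negbTE; tolia.
by rewrite !GadjE e1 e2 e3 e4 /=.
Qed.

Definition Qs (T : comNzRingType) (w : nat -> T) (j : nat) : T :=
  \sum_(C : {set 'I_n} | hard_particle C && [forall i in C, (j <= i)%N])
     \prod_(i in C) w i.

Lemma Qs_ge (T : comNzRingType) (w : nat -> T) j : (n <= j)%N -> Qs w j = 1.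
Proof.
move=> hj; rewrite /Qs (big_pred1 set0) ?big_set0 // => C /=.
apply/idP/eqP => [/ssrbool.andP [_ /forall_inP h] | ->].
- apply/setP => i; rewrite inE; apply/negbTE/negP => hi.
  have := h i hi; have := ltn_ord i; tolia.
- apply/ssrbool.andP; split; first by apply/hardP => i j'; rewrite inE.
  by apply/forall_inP => i; rewrite inE.
Qed.

Lemma Qs_ext (T : comNzRingType) (w w' : nat -> T) j :
  (forall i, (j <= i)%N -> (i < n)%N -> w i = w' i) -> Qs w j = Qs w' j.
Proof.
move=> h; apply: eq_bigr => C /ssrbool.andP [_ /forall_inP hC].
by apply: eq_bigr => i hi; apply: h; [apply: hC | apply: ltn_ord].
Qed.

Lemma ZG_Qs (T : comNzRingType) (w : nat -> T) :
  ZG (fun i : 'I_n => w i) = Qs w 0.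
Proof.
by apply: eq_bigl => C; rewrite /= andb_idr // => _; apply/forall_inP.
Qed.

Lemma Qs_rec (T : comNzRingType) (w : nat -> T) j (hj : (j < n)%N) :
  Qs w j = Qs w j.+1 + w j * Qs w (j + (if odd j then 3 else 2)%N).
Proof.
set J := Ordinal hj.
rewrite /Qs [LHS](bigID (fun C : {set 'I_n} => J \in C)) /= addrC; congr (_ + _).
- apply: eq_bigl => C; apply/idP/idP.
  + case/ssrbool.andP => /ssrbool.andP [hC /forall_inP hle] hJ.
    rewrite hC /=; apply/forall_inP => i hi.
    have hv : (i != j :> nat).
      apply/eqP => e; have hJi : J = i by apply: val_inj; rewrite /= e.
      by move: hJ; rewrite hJi hi.
    by have := hle i hi; clear -hv; tolia.
  + case/ssrbool.andP => hC /forall_inP hlt; rewrite hC /=.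
    apply/ssrbool.andP; split; first by apply/forall_inP => i hi; exact: ltnW (hlt i hi).
    by apply/negP => hJ; have := hlt J hJ; rewrite ltnn.
- rewrite (reindex_onto (fun C' => J |: C') (fun C => C :\ J)) /=; last first.
    by move=> C /ssrbool.andP [_ hJ]; exact: setD1K.
  rewrite big_distrr /=; apply: eq_big => C'.
  + apply/idP/idP.
    * move=> /ssrbool.andP [/ssrbool.andP [/ssrbool.andP [/hardP hC /forall_inP hle] _] /eqP heq].
      have hJ : J \notin C' by rewrite -heq setD11.
      apply/ssrbool.andP; split.
        by apply/hardP => a b ha hb; apply: hC; rewrite inE ?ha ?hb orbT.
      apply/forall_inP => i hi.
      have hiJ : i \in J |: C' by rewrite inE hi orbT.
      have hji := hle i hiJ.
      have hv : (i != j :> nat).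
        apply/eqP => e; have hJi : J = i by apply: val_inj; rewrite /= e.
      by move: hJ; rewrite hJi hi.
      have := hC J i (setU11 _ _) hiJ; rewrite GadjE /J /= !negb_or.
      case/and4P => h1 h2 _ _; move: h2; case: (odd j) => /=; rewrite ?andbT ?andbF //.
      - move=> h2; clear -hji hv h1 h2; tolia.
      - move=> _; clear -hji hv h1; tolia.
    * move=> /ssrbool.andP [/hardP hC /forall_inP hge].
      have hJ : J \notin C'.
          by apply/negP => hJ; have := hge J hJ; rewrite /J /=; clear -hj; case: (odd j) => /=; tolia.
      rewrite setU11 andbT (setU1K hJ) eqxx andbT.
      apply/ssrbool.andP; split.
      - apply/hardP => a b; rewrite !inE => /orP [/eqP -> | ha] /orP [/eqP -> | hb].
        + by rewrite Gadj_irr.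
        + by case/ssrbool.andP: (@nadj_far J b (hge b hb)).
        + by case/ssrbool.andP: (@nadj_far J a (hge a ha)).
        + exact: hC.
      - apply/forall_inP => i; rewrite !inE => /orP [/eqP -> // | hi].
        by have := hge i hi; clear; tolia.
  + move=> /ssrbool.andP [_ /eqP heq].
    have hJ : J \notin C' by rewrite -heq setD11.
    by rewrite big_setU1.
Qed.

End Graph.

Section Chain.
Variable R : comNzRingType.
Add Ring RR : (Rth R).

Lemma chain_alg (z0 z1 z'1 z'2 S U V : R) :
  z0 + z1 = S -> z0 * (z'1 + z'2) = S * z'2 ->
  (U + z'2 * V + z'1 * V) + z1 * U + z0 * (U + z'2 * V + z'1 * V) =
  (U + z'2 * V + z'1 * V) + S * (U + z'2 * V).
Proof.
move=> e1 e2; apply/eqP; rewrite -subr_eq0.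
have -> : (U + z'2 * V + z'1 * V) + z1 * U + z0 * (U + z'2 * V + z'1 * V) -
  ((U + z'2 * V + z'1 * V) + S * (U + z'2 * V)) =
  (z0 + z1 - S) * U + (z0 * (z'1 + z'2) - S * z'2) * V by mring R.
by rewrite e1 e2 !subrr !mul0r addr0.
Qed.

Definition zm (z' : nat -> R) (k : nat) : R := if k is k'.+1 then z' k'.*2.+1 else 0.

Variables (q q' z z' : nat -> R) (M : nat).
Hypothesis Hq : forall j, q j = q j.+1 + z j * q (j + (if odd j then 3 else 2))%N.
Hypothesis Hq' : forall j, q' j = q' j.+1 + z' j * q' (j + (if odd j then 3 else 2))%N.
Hypothesis Hb : forall j, (M <= j)%N -> [/\ q j = 1, q' j = 1, z j = 0 & z' j = 0].
Hypothesis L1 : forall k, z k.*2 + z k.*2.+1 = zm z' k + z' k.*2.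
Hypothesis L2 : forall k, z k.*2 * (z' k.*2.+1 + z' k.*2.+2) = (zm z' k + z' k.*2) * z' k.*2.+2.

Let HE (f g : nat -> R) (Hf : forall j, f j = f j.+1 + g j * f (j + (if odd j then 3 else 2))%N) k :
  f k.*2 = f k.*2.+1 + g k.*2 * f k.*2.+2.
Proof. by rewrite Hf odd_double addn2. Qed.
Let HO (f g : nat -> R) (Hf : forall j, f j = f j.+1 + g j * f (j + (if odd j then 3 else 2))%N) k :
  f k.*2.+1 = f k.*2.+2 + g k.*2.+1 * f k.*2.+4.
Proof. by rewrite Hf oddS odd_double /= addn3. Qed.
Let HE2 (f g : nat -> R) (Hf : forall j, f j = f j.+1 + g j * f (j + (if odd j then 3 else 2))%N) k :
  f k.*2.+2 = f k.*2.+3 + g k.*2.+2 * f k.*2.+4.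
Proof. by have := HE Hf k.+1; rewrite doubleS. Qed.

Definition Echain k := q k.*2 = q' k.*2.+1 + (zm z' k + z' k.*2) * q' k.*2.+2.

Let S_of_E m : Echain m.+1 -> q m.*2.+2 = q' m.*2.+1.
Proof.
rewrite /Echain doubleS /= => ->.
rewrite (HO Hq') (HE2 Hq'); mring R.
Qed.

Let E_base k : (M <= k)%N -> Echain k.
Proof.
move=> hk; rewrite /Echain.
have hk2 : (M <= k.*2)%N by apply: leq_trans hk _; rewrite -addnn leq_addr.
case: (Hb hk2) => -> _ _ ->.
have [_ -> _ _] := Hb (leq_trans hk2 (leqnSn _)).
have [_ -> _ _] := Hb (leq_trans hk2 (leq_trans (leqnSn _) (leqnSn _))).
case: k hk hk2 => [|k] hk hk2 /=; first by rewrite !addr0 mul0r addr0.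
have hk3 : (M <= k.*2.+1)%N by apply: leq_trans hk _; rewrite ltnS -addnn leq_addr.
by case: (Hb hk3) => _ _ _ ->; rewrite !addr0 mul0r addr0.
Qed.

Let E_step k : Echain k.+1 -> Echain k.+2 -> Echain k.
Proof.
move=> e1 e2.
have s1 := S_of_E e1.
have s2 := S_of_E e2; rewrite doubleS in s2.
rewrite /Echain (HE Hq) (HO Hq) s1 s2 (HO Hq') (HE2 Hq').
exact: chain_alg.
Qed.

Lemma chain k : Echain k.
Proof.
suff H : forall d k, (M <= k + d)%N -> Echain k /\ Echain k.+1.
  by case: (H M k (leq_addl _ _)).
elim => [|d IH] {}k hk.
- rewrite addn0 in hk; split; apply: E_base => //; exact: leq_trans hk (leqnSn _).
- have [e1 e2] := IH k.+1 (ltac:(by rewrite addSnnS)).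
  split => //; exact: E_step.
Qed.

End Chain.

Section FieldLemmas.
Variable F : fieldType.
Add Field FF : (Fth F).
Ltac fclose := repeat split; assumption.

Lemma fl1 (a0 a1 b_ b0 b1 b2 : F) : a0 != 0 -> a1 != 0 -> b0 != 0 -> b1 != 0 ->
  b0 * b0 + b1 * b_ != 0 ->
  a0 * b1 / (a1 * b0) + a0 * b2 / (a1 * b1) =
  b_ * ((b1 * b1 + b2 * b0) / a1) / (b0 * ((b0 * b0 + b1 * b_) / a0)) +
  b0 * ((b1 * b1 + b2 * b0) / a1) / (b1 * ((b0 * b0 + b1 * b_) / a0)).
Proof. move=> /eqP h1 /eqP h2 /eqP h3 /eqP h4 /eqP h5. mfield F. fclose. Qed.

Lemma fl1_0 (a1 b1 b2 : F) : a1 != 0 -> b1 != 0 ->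
  1 * b1 / (a1 * 1) + 1 * b2 / (a1 * b1) =
  0 + 1 * ((b1 * b1 + b2 * 1) / a1) / (b1 * 1).
Proof. move=> /eqP h2 /eqP h4. mfield F; fclose. Qed.

Lemma fl1_r (a0 b_ b0 : F) : a0 != 0 -> b0 != 0 -> b0 * b0 + b_ != 0 ->
  a0 * 1 / (1 * b0) + 0 =
  b_ * 1 / (b0 * ((b0 * b0 + 1 * b_) / a0)) +
  b0 * 1 / (1 * ((b0 * b0 + 1 * b_) / a0)).
Proof. move=> /eqP h1 /eqP h3 /eqP h5. mfield F; fclose. Qed.

Lemma fl2 (a0 a1 b0 b1 b2 c2 : F) : a0 != 0 -> a1 != 0 -> b0 != 0 -> b1 != 0 -> b2 != 0 ->
  b1 * b1 + b2 * b0 != 0 ->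
  a0 * b1 / (a1 * b0) * (b0 * c2 / (b1 * ((b1 * b1 + b2 * b0) / a1)) +
                         b1 * c2 / (b2 * ((b1 * b1 + b2 * b0) / a1))) =
  (a0 * b1 / (a1 * b0) + a0 * b2 / (a1 * b1)) * (b1 * c2 / (b2 * ((b1 * b1 + b2 * b0) / a1))).
Proof. move=> /eqP h1 /eqP h2 /eqP h3 /eqP h4 /eqP h5 /eqP h6. mfield F; fclose. Qed.

End FieldLemmas.


Section Seed.
Variable F : fieldType.
Variable r : nat.
Hypothesis hr : (1 <= r)%N.

Definition seed := ((nat -> F) * (nat -> F))%type.

Definition step (s : seed) : seed :=
  (s.2, fun a => if (1 <= a <= r)%N then (s.2 a ^+ 2 + s.2 a.+1 * s.2 a.-1) / s.1 a else 1).

Definition ygen (s : seed) (i : nat) : F :=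
  if ~~ odd i then
    let a := (i./2).+1 in s.1 a.-1 * s.2 a / (s.1 a * s.2 a.-1)
  else
    let a := (i./2).+1 in s.1 a.-1 * s.2 a.+1 / (s.1 a * s.2 a).

Definition Yt (s : seed) (i : nat) : F := if (i < 2 * r + 1)%N then ygen s i else 0.

Lemma ygenE s k : ygen s k.*2 = s.1 k * s.2 k.+1 / (s.1 k.+1 * s.2 k).
Proof. by rewrite /ygen odd_double /= half_double. Qed.

Lemma ygenO s k : ygen s k.*2.+1 = s.1 k * s.2 k.+2 / (s.1 k.+1 * s.2 k.+1).
Proof. by rewrite /ygen /= odd_double /= uphalf_double. Qed.

Definition zmK (s : seed) k : F := if k is k'.+1 then Yt (step s) k'.*2.+1 else 0.

Lemma step1 s : (step s).1 = s.2. Proof. by []. Qed.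

Lemma CdefS s k : (k < r)%N ->
  (step s).2 k.+1 = (s.2 k.+1 * s.2 k.+1 + s.2 k.+2 * s.2 k) / s.1 k.+1.
Proof. by move=> hk; rewrite /step /= hk expr2. Qed.

Lemma Cout s a : ~~ (1 <= a <= r)%N -> (step s).2 a = 1.
Proof. by move=> ha; rewrite /step /= (negbTE ha). Qed.

Variable s : seed.
Hypothesis HA : forall a, s.1 a != 0.
Hypothesis HB : forall a, s.2 a != 0.
Hypothesis HC : forall a, (step s).2 a != 0.
Hypothesis Hbd : forall a, ~~ (1 <= a <= r)%N -> s.1 a = 1 /\ s.2 a = 1.

Let Cnum k : (k < r)%N -> s.2 k.+1 * s.2 k.+1 + s.2 k.+2 * s.2 k != 0.
Proof.
move=> hk; have := HC k.+1; rewrite CdefS //.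
by apply: contra => /eqP ->; rewrite mul0r.
Qed.

Let lt_r k : (k < r)%N -> [/\ (k.*2 < 2 * r + 1)%N, (k.*2.+1 < 2 * r + 1)%N & (k.*2.+2 < 2 * r + 1)%N].
Proof. by move=> hk; split; tolia. Qed.

Lemma L1K k : Yt s k.*2 + Yt s k.*2.+1 = zmK s k + Yt (step s) k.*2.
Proof.
rewrite /Yt /zmK.
case: (ltngtP k r) => hk.
- case: (lt_r hk) => -> -> _.
  rewrite !ygenE ygenO step1 (CdefS _ hk).
  case: k hk => [|k] hk.
  + have [-> ->] : s.1 0 = 1 /\ s.2 0 = 1 by apply: Hbd.
    rewrite (Cout s (a := 0)) //.
    exact: fl1_0.
  + have hk' : (k < r)%N by apply: ltnW.
    rewrite /Yt; case: (lt_r hk') => _ -> _.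
    rewrite ygenO step1 (CdefS _ hk').
    rewrite (CdefS _ hk); apply: fl1 => //; exact: Cnum.
- have -> : (k.*2 < 2 * r + 1)%N = false by apply/negbTE; tolia.
  have -> : (k.*2.+1 < 2 * r + 1)%N = false by apply/negbTE; tolia.
  case: k hk => [|k] hk; first by rewrite !addr0.
  rewrite /Yt; have -> : (k.*2.+1 < 2 * r + 1)%N = false by apply/negbTE; tolia.
  by rewrite !addr0.
- case: k hk => [|k] hk; first by move: hr; rewrite -hk.
  rewrite /Yt.
  have -> : (k.+1.*2 < 2 * r + 1)%N by tolia.
  have -> : (k.+1.*2.+1 < 2 * r + 1)%N = false by apply/negbTE; tolia.
  have hk' : (k < r)%N by rewrite -hk.
  case: (lt_r hk') => _ -> _.
  rewrite !ygenE ygenO step1 (CdefS _ hk').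
  have [e1 e2] : s.1 k.+2 = 1 /\ s.2 k.+2 = 1 by apply: Hbd; rewrite -hk ltnn andbF.
  rewrite e1 e2.
  rewrite (Cout s (a := k.+2)) ?ltnn -?hk ?ltnn ?andbF //.
  apply: fl1_r => //.
  by have := Cnum hk'; rewrite e2 mul1r.
Qed.

Lemma ygenE2 s0 k : ygen s0 k.*2.+2 = s0.1 k.+1 * s0.2 k.+2 / (s0.1 k.+2 * s0.2 k.+1).
Proof. exact: (ygenE s0 k.+1). Qed.

Lemma L2K k : Yt s k.*2 * (Yt (step s) k.*2.+1 + Yt (step s) k.*2.+2) =
  (zmK s k + Yt (step s) k.*2) * Yt (step s) k.*2.+2.
Proof.
rewrite -L1K /Yt.
case: (ltnP k r) => hk.
- case: (lt_r hk) => -> -> ->.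
  rewrite ygenE ygenO ygenO ygenE2 !step1 (CdefS _ hk).
  by apply: fl2 => //; exact: Cnum.
- have -> : (k.*2.+1 < 2 * r + 1)%N = false by apply/negbTE; tolia.
  have -> : (k.*2.+2 < 2 * r + 1)%N = false by apply/negbTE; tolia.
  by rewrite addr0 !mulr0.
Qed.
End Seed.

Fixpoint ev (k : nat) : mpoly k -> rat :=
  match k return mpoly k -> rat with
  | 0 => fun x => x
  | k'.+1 => fun p : {poly mpoly k'} => @ev k' (p.[1])
  end.

Lemma evD k (p q : mpoly k) : ev (p + q) = ev p + ev q.
Proof. elim: k p q => [|k IH] p q //=. by rewrite hornerD IH. Qed.
Lemma evM k (p q : mpoly k) : ev (p * q) = ev p * ev q.
Proof. elim: k p q => [|k IH] p q //=. by rewrite hornerM IH. Qed.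
Lemma ev1 k : ev (1 : mpoly k) = 1.
Proof. elim: k => [|k IH] //=. by rewrite hornerC IH. Qed.
Lemma ev0 k : ev (0 : mpoly k) = 0.
Proof. elim: k => [|k IH] //=. by rewrite horner0 IH. Qed.
Lemma evvar k i : (i < k)%N -> ev (mvar k i) = 1.
Proof.
elim: k i => [|k IH] [|i] //= hi.
- by rewrite hornerX ev1.
- by rewrite hornerC IH.
Qed.


Section Good.
Variable r : nat.
Local Notation M := (mpoly (2 * r)).
Local Notation QF := (QField r).
Add Field QFF : (Fth QF).
Local Notation tf := (@FracField.tofrac M).

Definition Good (x : QF) (v : rat) :=
  exists p q : M, [/\ ev q != 0, x = tf p / tf q & v = ev p / ev q].

Lemma ev_nz (q : M) : ev q != 0 -> tf q != 0.
Proof.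
move=> h; rewrite tofrac_eq0; apply: contra h => /eqP ->; by rewrite ev0.
Qed.

Lemma goodD x x' v v' : Good x v -> Good x' v' -> Good (x + x') (v + v').
Proof.
move=> [p [q [hq -> ->]]] [p' [q' [hq' -> ->]]].
exists (p * q' + p' * q), (q * q'); split.
- by rewrite evM mulf_neq0.
- rewrite tofracD !tofracM.
  have /eqP h1 := ev_nz hq; have /eqP h2 := ev_nz hq'.
  mfield (QField r); split; assumption.
- rewrite evD !evM.
  move/eqP: hq => h1; move/eqP: hq' => h2.
  mfield rat; split; assumption.
Qed.

Lemma goodM x x' v v' : Good x v -> Good x' v' -> Good (x * x') (v * v').
Proof.
move=> [p [q [hq -> ->]]] [p' [q' [hq' -> ->]]].
exists (p * p'), (q * q'); split.
- by rewrite evM mulf_neq0.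
- rewrite !tofracM.
  have /eqP h1 := ev_nz hq; have /eqP h2 := ev_nz hq'.
  mfield (QField r); split; assumption.
- rewrite !evM.
  move/eqP: hq => h1; move/eqP: hq' => h2.
  mfield rat; split; assumption.
Qed.

Lemma goodV x x' v v' : Good x v -> Good x' v' -> v' != 0 -> Good (x / x') (v / v').
Proof.
move=> [p [q [hq -> ->]]] [p' [q' [hq' -> ->]]] hv.
have hp' : ev p' != 0 by apply: contra hv => /eqP ->; rewrite mul0r.
exists (p * q'), (q * p'); split.
- by rewrite evM mulf_neq0.
- rewrite !tofracM.
  have /eqP h1 := ev_nz hq; have /eqP h2 := ev_nz hq'; have /eqP h3 := ev_nz hp'.
  mfield (QField r); split; try split; assumption.
- rewrite !evM.
  move/eqP: hq => h1; move/eqP: hq' => h2; move/eqP: hp' => h3.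
  mfield rat; split; try split; assumption.
Qed.

Lemma good1 : Good 1 1.
Proof. by exists 1, 1; rewrite ev1 tofrac1 !divr1 oner_eq0. Qed.

Lemma goodvar i : (i < 2 * r)%N -> Good (tf (mvar (2 * r) i)) 1.
Proof. by move=> hi; exists (mvar (2 * r) i), 1; rewrite ev1 evvar // tofrac1 !divr1 oner_eq0. Qed.

Lemma good_nz x v : Good x v -> v != 0 -> x != 0.
Proof.
move=> [p [q [hq -> ->]]] hv.
rewrite mulf_eq0 invr_eq0 negb_or (ev_nz hq) andbT tofrac_eq0.
by apply: contra hv => /eqP ->; rewrite ev0 mul0r.
Qed.
End Good.

Section QpairGood.
Variable r : nat.
Local Notation Pos x := (exists2 v : rat, 0 < v & Good x v).

Lemma Qpair_good n :
  (forall a, Pos ((Qpair r n).1 a) /\ Pos ((Qpair r n).2 a)) /\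
  (forall a, ~~ (1 <= a <= r)%N -> (Qpair r n).1 a = 1 /\ (Qpair r n).2 a = 1).
Proof.
have P1 : Pos (1 : QField r) by exists 1 => //; exact: good1.
elim: n => [|n [IHg IHb]].
- split => a.
  + rewrite /= /Qinit0 /Qinit1; case: ifP => ha; last by split.
    case/andP: ha => ha1 ha2.
    split; exists 1 => //; apply: goodvar.
    * by tolia.
    * by tolia.
  + by move=> ha; rewrite /= /Qinit0 /Qinit1 (negbTE ha).
- move: IHg IHb; rewrite /=; case: (Qpair r n) => A B IHg IHb /=.
  split => a.
  + split; first by case: (IHg a) => _ h; exact: h.
    case: ifP => ha //.
    have [[vA hvA gA] _] := IHg a.
    have [_ [vB hvB gB]] := IHg a.
    have [_ [vB1 hvB1 gB1]] := IHg a.+1.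
    have [_ [vB2 hvB2 gB2]] := IHg a.-1.
    exists ((vB * vB + vB1 * vB2) / vA).
      by rewrite divr_gt0 // addr_gt0 // mulr_gt0.
    apply: goodV; last by rewrite gt_eqF.
    + by rewrite expr2; apply: goodD; apply: goodM.
    + exact: gA.
  + move=> ha; split; first by case: (IHb a ha) => _ h; exact: h.
    by rewrite (negbTE ha).
Qed.
End QpairGood.

Section Main.
Variable F : fieldType.
Variable r : nat.
Hypothesis hr : (1 <= r)%N.
Local Notation n := (2 * r + 1)%N.
Definition PRi : comNzRingType := {poly F}.
Add Ring PR : (Rth PRi).

Definition zz (x : F) : {poly F} := - (x%:P * 'X).
Definition qp (s : seed F) m := iter m (step r) s.
Definition goodseed (s : seed F) :=
  [/\ forall a, s.1 a != 0, forall a, s.2 a != 0 &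
      forall a, ~~ (1 <= a <= r)%N -> s.1 a = 1 /\ s.2 a = 1].
Definition wts (s : seed F) j := zz (Yt r s j).
Definition Dn (s : seed F) := ZG (fun i : 'I_n => zz (ygen s i)).
Definition Nm (s : seed F) := ZG (fun i : 'I_n => if val i == 0%N then 0 else zz (ygen s i)).

Lemma zz0 : zz 0 = 0. Proof. by rewrite /zz polyC0 mul0r oppr0. Qed.
Lemma zzD a b : zz a + zz b = zz (a + b).
Proof. by rewrite /zz polyCD mulrDl opprD. Qed.
Lemma zzM a b : zz a * zz b = (a * b)%:P * ('X * 'X).
Proof. rewrite /zz mulrNN polyCM; mring PRi. Qed.

Lemma wts_big s j : (n <= j)%N -> wts s j = 0.
Proof. by move=> hj; rewrite /wts /Yt ltnNge hj /= zz0. Qed.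

Lemma wts_rec s j : Qs r (wts s) j =
  Qs r (wts s) j.+1 + wts s j * Qs r (wts s) (j + (if odd j then 3 else 2))%N.
Proof.
case: (ltnP j n) => hj; first exact: Qs_rec.
rewrite wts_big // mul0r addr0 !Qs_ge //; by case: (odd j) => /=; tolia.
Qed.

Lemma Dn_Qs s : Dn s = Qs r (wts s) 0.
Proof.
rewrite /Dn (ZG_Qs r (fun j => zz (ygen s j))).
by apply: Qs_ext => i _ hi; rewrite /wts /Yt hi.
Qed.

Lemma Nm_Qs s : Nm s = Qs r (wts s) 1.
Proof.
rewrite /Nm (ZG_Qs r (fun j => if j == 0%N then 0 else zz (ygen s j))).
rewrite Qs_rec ?addn1 // eqxx mul0r addr0.
by apply: Qs_ext => -[|i] // _ hi; rewrite /wts /Yt hi.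
Qed.

Lemma Qs_coef0 s j : (Qs r (wts s) j)`_0 = 1.
Proof.
suff H : forall d j, (n <= j + d)%N -> (Qs r (wts s) j)`_0 = 1.
  by apply: (H n); rewrite leq_addl.
elim => [|d IH] {}j hj.
- by rewrite addn0 in hj; rewrite Qs_ge // coefC.
- rewrite wts_rec coefD coef0M /wts /zz coefN coefCM coefX mulr0 oppr0 mul0r addr0.
  by apply: IH; rewrite addSnnS.
Qed.

Lemma zm_zz s k : zm (wts (step r s)) k = zz (zmK r s k).
Proof. by case: k => [|k] //=; rewrite zz0. Qed.

Section OneStep.
Variable s : seed F.
Hypothesis Hs : goodseed s.
Hypothesis HC : forall a, (step r s).2 a != 0.

Let HA : forall a, s.1 a != 0. Proof. by case: Hs. Qed.
Let HB : forall a, s.2 a != 0. Proof. by case: Hs. Qed.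
Let Hbd : forall a, ~~ (1 <= a <= r)%N -> s.1 a = 1 /\ s.2 a = 1. Proof. by case: Hs. Qed.

Let Ech k := chain (wts_rec s) (wts_rec (step r s)) (M := n)
  (fun j hj => And4 (Qs_ge _ hj) (Qs_ge _ hj) (wts_big s hj) (wts_big (step r s) hj))
  (fun k => ltac:(rewrite zm_zz /wts !zzD; congr zz; exact: (L1K hr HA HB HC Hbd k)))
  (fun k => ltac:(rewrite zm_zz /wts !zzD !zzM (L2K hr HA HB HC Hbd k) //))
  k.

Lemma Dn_step : Dn (step r s) = Dn s.
Proof.
have e0 := Ech 0; rewrite /Echain /= !double0 add0r in e0.
by rewrite !Dn_Qs e0 (wts_rec (step r s) 0) /= add0n.
Qed.

Lemma Q2_step : Qs r (wts s) 2 = Nm (step r s).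
Proof.
have e1 := Ech 1; rewrite /Echain /= !doubleS !double0 in e1.
rewrite Nm_Qs e1 (wts_rec (step r s) 1) /= (wts_rec (step r s) 2) /= addn2 addn3.
mring PRi.
Qed.

Lemma ND_step : Nm s - Dn s = (Yt r s 0)%:P * 'X * Nm (step r s).
Proof.
rewrite Nm_Qs Dn_Qs (wts_rec s 0) /= add0n -Q2_step /wts /zz.
mring PRi.
Qed.
End OneStep.

Lemma qpS s m : qp s m.+1 = qp (step r s) m.
Proof. by rewrite /qp iterSr. Qed.

Lemma main_gen m : forall s, (forall k, goodseed (qp s k)) ->
  (qp s m).1 1 = s.1 1 * fps_mul (fps_of_poly (Nm s)) (fps_inv (fps_of_poly (Dn s))) m.
Proof.
have D0 s : (Dn s)`_0 = 1 by rewrite Dn_Qs Qs_coef0.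
have N0 s : (Nm s)`_0 = 1 by rewrite Nm_Qs Qs_coef0.
elim: m => [|m IH] s H.
- by rewrite fps_mul0 fps_inv0 /fps_of_poly D0 N0 invr1 !mulr1.
- have Hs := H 0; have HC : forall a, (step r s).2 a != 0 by case: (H 1).
  rewrite qpS IH; last by move=> k; rewrite -qpS.
  rewrite (Dn_step Hs HC).
  set I := fps_inv (fps_of_poly (Dn s)).
  have hD : fps_of_poly (Dn s) 0 != 0 by rewrite /fps_of_poly D0 oner_eq0.
  have -> : fps_mul (fps_of_poly (Nm s)) I m.+1 =
     fps_mul (fps_of_poly (Nm s)) I m.+1 - fps_mul (fps_of_poly (Dn s)) I m.+1.
    by rewrite /I fps_mul_inv0 // subr0.
  rewrite /fps_mul -sumrB.
  rewrite [X in _ = _ * X](eq_bigr (fun i : 'I_m.+2 =>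
     (fps_of_poly (Nm s - Dn s) i) * I (m.+1 - i)%N)); last first.
    by move=> i _; rewrite /fps_of_poly coefB mulrBl.
  rewrite [X in _ = _ * X]big_ord_recl /fps_of_poly /= coefB N0 D0 subrr mul0r add0r ND_step //.
  rewrite [X in _ = _ * X](eq_bigr (fun i : 'I_m.+1 =>
     Yt r s 0 * ((Nm (step r s))`_i * I (m - i)%N))); last first.
    by move=> i _; rewrite /bump leq0n add1n subSS -mulrA coefCM coefXM /= mulrA.
  rewrite -mulr_sumr mulrA; congr (_ * _).
  case: Hs => HA HB Hbd.
  have [e1 e2] : s.1 0 = 1 /\ s.2 0 = 1 by apply: Hbd.
  rewrite /Yt addn1 ltn0Sn /ygen /= e1 e2 mul1r mulr1.
  by rewrite mulrC divfK.
Qed.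
End Main.

Lemma QpairE r m : Qpair r m = qp r (Qpair r 0) m.
Proof.
elim: m => [|m IH] //.
rewrite /qp iterS -/(qp r (Qpair r 0) m) -IH.
by rewrite /=; case: (Qpair r m).
Qed.

Lemma Qpair_goodseed r k : goodseed r (qp r (Qpair r 0) k).
Proof.
rewrite -QpairE; have [Hg Hb] := Qpair_good r k.
split => // a.
- by have [[v hv gv] _] := Hg a; exact: (good_nz gv (lt0r_neq0 hv)).
- by have [_ [v hv gv]] := Hg a; exact: (good_nz gv (lt0r_neq0 hv)).
Qed.

Theorem mainTheorem8 (r : nat) (hr : (1 <= r)%N) :
  let y := yw r in
  let Num := ZG (fun i : 'I_(2 * r + 1) =>
                   if val i == 0%N then 0 else - ((y i)%:P * 'X)) in
  let Den := ZG (fun i : 'I_(2 * r + 1) => - ((y i)%:P * 'X)) in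
  forall n : nat,
    Qsys r 1 n =
    fps_scale (Qsys r 1 0)
      (fps_mul (fps_of_poly Num) (fps_inv (fps_of_poly Den))) n.
Proof.
move=> y Num Den m.
rewrite /Qsys /fps_scale (QpairE r m).
rewrite (main_gen hr m (Qpair_goodseed r)).
by [].
Qed.
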